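(* Let $d\ge 0$ be an integer. Then: (1) $f(1,d)=\frac{2}{d+2}$ if $d$ is even, and $f(1,d)=\frac{2(d+2)}{(d+1)(d+3)}$ if $d$ is odd. (2) The value $f(1,d)$ equals $\frac{\alpha_1(G)}{n(G)}$ for $G=J_{d+2}$ when $d$ is even, and for $G=(d+3)J_{d+1}\cup(d+1)J_{d+3}$ (disjoint union of $d+3$ copies of $J_{d+1}$ and $d+1$ copies of $J_{d+3}$) when $d$ is odd; these graphs have average degree at most $d$. (3) $f(1,d)\ge \frac{2}{d+2}$. (4) For every finite simple graph $G$ on $n\ge 1$ vertices, $\alpha_1(G)\ge \frac{2n}{\lceil d(G)\rceil+2}$.
   Context: For a graph $G=(V,E)$ and an integer $k\ge 0$, a $k$-independent set is a set $S\subseteq V$ such that the induced subgraph $G[S]$ has maximum degree at most $k$; $\alpha_k(G)$ denotes the maximum cardinality of a $k$-independent set of $G$. $n(G)$ is the number of vertices and $d(G)=2|E(G)|/n(G)$ the average degree. For integers $d,k\ge 0$, $f(k,d)=\inf\left\{\frac{\alpha_k(G)}{n(G)} : G \text{ a finite simple graph with at least one vertex and } d(G)\le d\right\}$. For an even integer $m\ge 2$, $J_m$ denotes the complete graph $K_m$ with the edges of a perfect matching removed. *)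

(* Defs.v *)
From HB Require Import structures.
From mathcomp Require Import all_boot all_order all_algebra.
Set Implicit Arguments. Unset Strict Implicit. Unset Printing Implicit Defensive.
Import Order.TTheory GRing.Theory Num.Theory.

Definition simple_graph (T : finType) (g : rel T) : Prop :=
  symmetric g /\ irreflexive g.

Definition nverts (T : finType) := #|T|.

Definition nedges (T : finType) (g : rel T) : nat :=
  #|[set E : {set T} | [exists x, exists y, g x y && (E == [set x; y])]]|.

Local Open Scope ring_scope.

Definition avgdeg (T : finType) (g : rel T) : rat :=
  (2 * nedges g)%:R / (#|T|)%:R.

Definition kindep (T : finType) (g : rel T) (k : nat) (S : {set T}) : bool :=
  [forall x in S, #|[set y in S | g x y]| <= k]%N.

Definition alpha (T : finType) (g : rel T) (k : nat) : nat :=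
  \max_(S : {set T} | kindep g k S) #|S|.

Definition kratio (T : finType) (g : rel T) (k : nat) : rat :=
  (alpha g k)%:R / (#|T|)%:R.

Definition fvals (k d : nat) (r : rat) : Prop :=
  exists (T : finType) (g : rel T),
    [/\ simple_graph g, (0 < #|T|)%N, avgdeg g <= d%:R & r = kratio g k].

Definition is_f (k d : nat) (x : rat) : Prop :=
  (forall r, fvals k d r -> x <= r) /\
  (forall y : rat, (forall r, fvals k d r -> y <= r) -> y <= x).

(* J_m : K_m minus the perfect matching {2i, 2i+1} (m even) *)
Definition Jrel (m : nat) : rel 'I_m :=
  fun i j => (i != j) && ((i : nat)./2 != (j : nat)./2).

Definition copiesJ (c m : nat) : rel ('I_c * 'I_m)%type :=
  fun p q => (p.1 == q.1) && Jrel p.2 q.2.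

Definition sumrel (A B : finType) (ga : rel A) (gb : rel B) : rel (A + B)%type :=
  fun p q => match p, q with
             | inl a, inl a' => ga a a'
             | inr b, inr b' => gb b b'
             | _, _ => false
             end.

Definition oddGraph (d : nat) :=
  sumrel (@copiesJ d.+3 d.+1) (@copiesJ d.+1 d.+3).

(* Main.v *)
Require Import Defs.
From HB Require Import structures.
From mathcomp Require Import all_boot all_order all_algebra.
From mathcomp Require Import zify.
Import Order.TTheory GRing.Theory Num.Theory.
Set Implicit Arguments. Unset Strict Implicit.

Lemma cardE_sum (T : finType) (S : {set T}) (P : pred T) :
  #|[set y in S | P y]| = \sum_(y in S) P y.
Proof.
rewrite -sum1_card big_mkcond [RHS]big_mkcond /=.
apply: eq_bigr => y _; rewrite !inE; by case: (y \in S); case: (P y).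
Qed.

Definition degU (T : finType) (g : rel T) (U : {set T}) (x : T) : nat :=
  \sum_(y in U) g x y.
Definition DU (T : finType) (g : rel T) (U : {set T}) : nat :=
  \sum_(x in U) degU g U x.
Definition alU (T : finType) (g : rel T) (U : {set T}) : nat :=
  \max_(S : {set T} | (S \subset U) && kindep g 1 S) #|S|.

Lemma degU_del (T : finType) (g : rel T) (U : {set T}) v x :
  v \in U -> degU g U x = g x v + degU g (U :\ v) x.
Proof. move=> vU; by rewrite /degU (big_setD1 _ vU). Qed.

Lemma D_del (T : finType) (g : rel T) (U : {set T}) v :
  simple_graph g -> v \in U -> DU g U = DU g (U :\ v) + 2 * degU g U v.
Proof.
move=> [sym irr] vU.
rewrite /DU (big_setD1 _ vU) /=.
rewrite (eq_bigr (fun x => g x v + degU g (U :\ v) x)); last by move=> x _; exact: degU_del.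
rewrite big_split /=.
have -> : \sum_(i in U :\ v) g i v = degU g U v.
  rewrite /degU (big_setD1 _ vU) irr /= add0n.
  by apply: eq_bigr => x _; rewrite sym.
lia.
Qed.

Lemma alU_mono (T : finType) (g : rel T) (U V : {set T}) :
  U \subset V -> alU g U <= alU g V.
Proof.
move=> UV; apply/bigmax_leqP => S /andP[SU kS].
apply: leq_bigmax_cond; rewrite kS andbT; exact: subset_trans UV.
Qed.

Lemma alU_ge (T : finType) (g : rel T) (U S : {set T}) :
  S \subset U -> kindep g 1 S -> #|S| <= alU g U.
Proof. move=> SU kS; apply: leq_bigmax_cond; by rewrite SU kS. Qed.

Lemma sum_partition (T : finType) t (f : T -> 'I_t) (U : {set T}) (P : pred T) :
  \sum_(y in U) P y = \sum_(c : 'I_t) \sum_(y in U) (P y && (f y == c)).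
Proof.
rewrite exchange_big /=; apply: eq_bigr => y _.
rewrite (bigD1 (f y)) //= eqxx andbT big1 ?addn0 // => c cy.
by rewrite eq_sym (negbTE cy) andbF.
Qed.


Definition hh (T : finType) (g : rel T) t (f : {ffun T -> 'I_t}) (y z : T) : nat :=
  g y z && (f y == f z).
Definition cost (T : finType) (g : rel T) (U : {set T}) t (f : {ffun T -> 'I_t}) : nat :=
  \sum_(y in U) \sum_(z in U) hh g f y z.

Lemma cost_split (T : finType) (g : rel T) (U : {set T}) t (f : {ffun T -> 'I_t}) x :
  simple_graph g -> x \in U ->
  cost g U f = 2 * (\sum_(z in U) hh g f x z) +
     \sum_(y in U :\ x) \sum_(z in U :\ x) hh g f y z.
Proof.
move=> [sym irr] xU; rewrite /cost (big_setD1 _ xU) /=.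
have E1 : \sum_(y in U :\ x) \sum_(z in U) hh g f y z =
   \sum_(y in U :\ x) (hh g f y x + \sum_(z in U :\ x) hh g f y z).
  by apply: eq_bigr => y _; rewrite (big_setD1 x xU).
rewrite E1 big_split /=.
have -> : \sum_(i in U :\ x) hh g f i x = \sum_(z in U) hh g f x z.
  rewrite [RHS](big_setD1 x xU) /= {2}/hh irr /= add0n.
  by apply: eq_bigr => y _; rewrite /hh sym eq_sym.
lia.
Qed.

Lemma lovasz (T : finType) (g : rel T) (U : {set T}) t :
  simple_graph g -> 0 < t -> (forall x, x \in U -> degU g U x < 2 * t) ->
  #|U| <= t * alU g U.
Proof.
move=> sg t0 hdeg.
pose f0 : {ffun T -> 'I_t} := [ffun _ => Ordinal t0].
case: (@arg_minnP _ f0 xpredT (@cost T g U t) isT) => f _ fmin.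
have own1 : forall x, x \in U -> \sum_(y in U) (g x y && (f y == f x)) <= 1.
  move=> x xU.
  have hc : forall c, \sum_(y in U) (g x y && (f y == f x)) <= \sum_(y in U) (g x y && (f y == c)).
    move=> c.
    pose f' : {ffun T -> 'I_t} := [ffun y => if y == x then c else f y].
    have := fmin f' isT.
    rewrite (cost_split f sg xU) (cost_split f' sg xU).
    have -> : \sum_(y in U :\ x) \sum_(z in U :\ x) hh g f' y z =
              \sum_(y in U :\ x) \sum_(z in U :\ x) hh g f y z.
      apply: eq_bigr => y; rewrite !inE => /andP[yx _]; apply: eq_bigr => z.
      by rewrite !inE => /andP[zx _]; rewrite /hh /f' !ffunE (negbTE yx) (negbTE zx).
    have -> : \sum_(z in U) hh g f' x z = \sum_(y in U) (g x y && (f y == c)).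
      apply: eq_bigr => y _; rewrite /hh /f' !ffunE eqxx.
      case gxy: (g x y) => //=.
      have : y != x by apply/eqP => yx; move: gxy; rewrite yx (snd sg).
      by move/negbTE => ->; rewrite eq_sym.
    have -> : \sum_(z in U) hh g f x z = \sum_(y in U) (g x y && (f y == f x)).
      by apply: eq_bigr => y _; rewrite /hh eq_sym.
    lia.
  have : t * \sum_(y in U) (g x y && (f y == f x)) <= degU g U x.
    rewrite /degU (sum_partition f U (g x)).
    have : \sum_(c : 'I_t) \sum_(y in U) (g x y && (f y == f x)) <= \sum_(c : 'I_t) \sum_(y in U) (g x y && (f y == c)).
      by apply: leq_sum => c _; exact: hc c.
    by rewrite sum_nat_const card_ord.
  have := hdeg x xU.
  set o := \sum_(y in U) _; move=> h1 h2.
  have : t * o < t * 2 by lia.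
  rewrite ltn_pmul2l //; lia.
pose S (c : 'I_t) := [set y in U | f y == c].
have kS : forall c, kindep g 1 (S c).
  move=> c; apply/forallP => x; apply/implyP; rewrite !inE => /andP[xU /eqP fx].
  rewrite cardE_sum.
  have -> : \sum_(y in S c) g x y = \sum_(y in U) (g x y && (f y == f x)).
    rewrite big_mkcond [RHS]big_mkcond /=; apply: eq_bigr => y _.
    rewrite /S !inE fx; by case: (y \in U); case: (g x y); case: (f y == c).
  exact: own1.
have SU : forall c, S c \subset U by move=> c; apply/subsetP => y; rewrite inE => /andP[].
pose cs := [arg max_(c > Ordinal t0) #|S c|].
have hU : #|U| = \sum_(c : 'I_t) #|S c|.
  rewrite -sum1_card (sum_partition f U (fun _ => true)).
  apply: eq_bigr => c _; rewrite /S cardE_sum.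
  by [].
case: (@arg_maxnP _ (Ordinal t0) xpredT (fun c => #|S c|) isT) => c _ cmax.
rewrite hU.
apply: (@leq_trans (t * #|S c|)).
  have : \sum_(c' : 'I_t) #|S c'| <= \sum_(c' : 'I_t) #|S c|.
    by apply: leq_sum => c' _; exact: cmax c' isT.
  by rewrite sum_nat_const card_ord.
rewrite leq_pmul2l //; exact: alU_ge.
Qed.


Lemma core (T : finType) (g : rel T) : simple_graph g -> forall t (U : {set T}),
  0 < t -> 4 * t * #|U| <= 2 * t * (t + 1) * alU g U + DU g U.
Proof.
move=> sg; elim=> [//|t IHt] U _.
have [n] := ubnP #|U|; elim: n U => // n IHn U Un.
case: (ltnP (DU g U) (2 * t * #|U|)) => hD.
  have t0 : 0 < t by case: t {IHt IHn} hD => //; rewrite mul0n.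
  have h := IHt U t0.
  set a := alU g U in h *; set D := DU g U in h hD *; set m := #|U| in h hD *.
  have h2 : (t + 2) * (4 * t * m) <= (t + 2) * (2 * t * (t + 1) * a + D) by rewrite leq_mul2l h orbT.
  nia.
case: (boolP [exists v in U, 2 * t.+1 <= degU g U v]).
  case/exists_inP => v vU hv.
  have hc : #|U :\ v| < n by rewrite (cardsD1 v U) vU in Un.
  have h := IHn _ hc.
  have hal := alU_mono g (subsetDl U [set v]).
  rewrite (D_del sg vU).
  have := cardsD1 v U; rewrite vU.
  set a := alU g U in hal *; set a' := alU g (U :\ v) in h hal *.
  nia.
rewrite negb_exists_in => /forall_inP hall.
have hl : #|U| <= t.+1 * alU g U.
  apply: lovasz => // x xU; have := hall x xU; rewrite -ltnNge; lia.
set a := alU g U in hl *; set D := DU g U in hD *; set m := #|U| in hl hD *.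
have h2 : 2 * (t + 2) * m <= 2 * (t + 2) * (t.+1 * a) by rewrite leq_mul2l hl orbT.
nia.
Qed.


Lemma sumT (T : finType) (F : T -> nat) : \sum_(x in [set: T]) F x = \sum_x F x.
Proof. by apply: eq_bigl => x; rewrite inE. Qed.

Lemma alpha_alU (T : finType) (g : rel T) : alpha g 1 = alU g setT.
Proof. by rewrite /alpha /alU; apply: eq_bigl => S; rewrite subsetT. Qed.

Lemma edges_DU (T : finType) (g : rel T) : simple_graph g ->
  2 * nedges g = DU g setT.
Proof.
move=> [sym irr].
pose P := [set p : T * T | g p.1 p.2].
pose Es := [set E : {set T} | [exists x, exists y, g x y && (E == [set x; y])]].
have hP : DU g setT = #|P|.
  rewrite /DU /degU sumT (eq_bigr (fun x => \sum_y g x y)); last by move=> x _; rewrite sumT.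
  rewrite pair_bigA /= -sum1_card [RHS]big_mkcond /=.
  by apply: eq_bigr => p _; rewrite /P inE.
rewrite hP /nedges -/Es.
have h1 : #|P| = \sum_(p in P) \sum_(E in Es) ([set p.1; p.2] == E).
  rewrite -sum1_card; apply: eq_bigr => p pP.
  have pE : [set p.1; p.2] \in Es.
    rewrite inE; apply/existsP; exists p.1; apply/existsP; exists p.2.
    by rewrite eqxx andbT; move: pP; rewrite inE.
  rewrite (bigD1 _ pE) /= eqxx big1 // => E /andP[_ hE].
  by rewrite eq_sym (negbTE hE).
rewrite h1 exchange_big /= mulnC -sum_nat_const.
apply: eq_bigr => E; rewrite inE => /existsP[x /existsP[y /andP[gxy /eqP ->]]].
have xy : x != y by apply/eqP => e; move: gxy; rewrite e irr.
rewrite -cardE_sum.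
have -> : [set p in P | [set p.1; p.2] == [set x; y]] = [set (x, y); (y, x)].
  apply/setP => -[a b]; rewrite !inE /=.
  apply/idP/idP.
  - move=> /andP[gab /eqP hs].
    have ha : a \in [set x; y] by rewrite -hs !inE eqxx.
    have hb : b \in [set x; y] by rewrite -hs !inE eqxx orbT.
    have ab : a != b by apply/eqP => e; move: gab; rewrite e irr.
    move: ha hb; rewrite !inE !xpair_eqE.
    case/orP=> /eqP ea; case/orP=> /eqP eb; subst;
      rewrite ?eqxx ?(negbTE xy) //= ?andbT ?orbT //; by rewrite eqxx in ab.
  - case/orP=> /eqP [-> ->]; first by rewrite gxy eqxx.
    by rewrite sym gxy setUC eqxx.
rewrite cards2; case: eqP => // [[e _]]; by rewrite e eqxx in xy.
Qed.


Lemma eq_half_odd (a b : nat) : a./2 = b./2 -> odd a = odd b -> a = b.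
Proof. by move=> h o; rewrite -[a]odd_double_half -[b]odd_double_half h o. Qed.

Lemma half3 (a b c : nat) : a./2 = b./2 -> b./2 = c./2 -> a != b -> b != c -> a != c -> False.
Proof.
move=> hab hbc nab nbc nac.
case oa: (odd a); case ob: (odd b); case oc: (odd c).
all: first [ by move: nab; rewrite (eq_half_odd hab) ?oa ?ob ?eqxx
           | by move: nbc; rewrite (eq_half_odd hbc) ?ob ?oc ?eqxx
           | by move: nac; rewrite (eq_half_odd (etrans hab hbc)) ?oa ?oc ?eqxx ].
Qed.

Lemma sum_partitionK (T K : finType) (f : T -> K) (U : {set T}) (P : pred T) :
  \sum_(y in U) P y = \sum_(c : K) \sum_(y in U) (P y && (f y == c)).
Proof.
rewrite exchange_big /=; apply: eq_bigr => y _.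
rewrite (bigD1 (f y)) //= eqxx andbT big1 ?addn0 // => c cy.
by rewrite eq_sym (negbTE cy) andbF.
Qed.

Lemma two_nbrs (T : finType) (g : rel T) (S : {set T}) x y z :
  kindep g 1 S -> x \in S -> y \in S -> z \in S -> y != z -> g x y -> g x z -> False.
Proof.
move=> /forall_inP /(_ x) kS xS yS zS yz gy gz.
have := kS xS.
have : [set y; z] \subset [set w in S | g x w].
  by apply/subsetP => w; rewrite !inE => /orP[] /eqP ->; rewrite ?yS ?zS ?gy ?gz.
move/subset_leq_card; rewrite cards2 yz; lia.
Qed.

Lemma ub_key (T K : finType) (g : rel T) (key : T -> K) (h : T -> nat) :
  (forall x y, key x = key y -> h x != h y -> g x y) ->
  (forall x y z, key x = key y -> key y = key z -> h x = h y -> h y = h z ->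
     x != y -> y != z -> z != x -> False) ->
  forall S, kindep g 1 S -> #|S| <= 2 * #|K|.
Proof.
move=> hg h3 S kS.
rewrite -sum1_card (sum_partitionK key S (fun _ => true)).
apply: (@leq_trans (\sum_(k : K) 2)); last by rewrite sum_nat_const mulnC.
apply: leq_sum => k _.
rewrite -cardE_sum leqNgt; apply/negP => /card_gt2P [a [b [c [[] ]]]].
rewrite !inE => /andP[aS /eqP ka] /andP[bS /eqP kb] /andP[cS /eqP kc] [ab bc ca].
have kab : key a = key b by rewrite ka kb.
have kbc : key b = key c by rewrite kb kc.
case: (eqVneq (h a) (h b)) => hab; case: (eqVneq (h b) (h c)) => hbc.
- exact: (h3 a b c).
-
  apply: (two_nbrs kS cS aS bS ab).
  + by apply: hg; [rewrite -kbc -kab | rewrite hab eq_sym].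
  + by apply: hg; [rewrite -kbc | rewrite eq_sym].
-
  apply: (two_nbrs kS aS bS cS bc).
  + exact: hg.
  + by apply: hg; [rewrite kab | rewrite -hbc].
- case: (eqVneq (h a) (h c)) => hac.
  +
    apply: (two_nbrs kS bS aS cS); first by rewrite eq_sym.
    * by apply: hg; [rewrite kab | rewrite eq_sym].
    * exact: hg.
  + apply: (two_nbrs kS aS bS cS bc).
    * exact: hg.
    * by apply: hg; [rewrite kab kbc|].
Qed.


Lemma J_ub m (S : {set 'I_m}) : kindep (@Jrel m) 1 S -> #|S| <= 2.
Proof.
move=> kS; apply: (@leq_trans (2 * #|{: unit}|)); last by rewrite card_unit.
apply: (@ub_key _ unit (@Jrel m) (fun _ => tt) (fun i => (i : nat)./2)) kS.
- move=> x y _ hne; rewrite /Jrel hne andbT.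
  by apply/eqP => e; move: hne; rewrite e eqxx.
- move=> x y z _ _ hxy hyz nxy nyz nzx.
  by apply: (half3 hxy hyz nxy nyz); rewrite eq_sym.
Qed.

Definition okey d (x : ('I_d.+3 * 'I_d.+1) + ('I_d.+1 * 'I_d.+3)) : 'I_d.+3 + 'I_d.+1 :=
  match x with inl p => inl p.1 | inr p => inr p.1 end.
Definition oh d (x : ('I_d.+3 * 'I_d.+1) + ('I_d.+1 * 'I_d.+3)) : nat :=
  match x with inl p => (p.2 : nat)./2 | inr p => (p.2 : nat)./2 end.

Lemma pair_neq (A B : eqType) (p q : A * B) : p.1 = q.1 -> p != q -> p.2 != q.2.
Proof. case: p q => [p1 p2] [q1 q2] /= -> ; apply: contraNneq => ->; by []. Qed.

Lemma odd_ub d (S : {set ('I_d.+3 * 'I_d.+1) + ('I_d.+1 * 'I_d.+3)}) :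
  kindep (@oddGraph d) 1 S -> #|S| <= 4 * d.+2.
Proof.
move=> kS; apply: (@leq_trans (2 * #|{: 'I_d.+3 + 'I_d.+1}|)).
  apply: (@ub_key _ _ (@oddGraph d) (@okey d) (@oh d)) kS.
  - case=> [p|p] [q|q] //= [e] hne; rewrite /copiesJ e eqxx /= /Jrel hne andbT;
      by apply/eqP => e2; move: hne; rewrite e2 eqxx.
  - case=> [p|p] [q|q] [r|r] //= [e1] [e2] h1 h2 n1 n2 n3.
    + have := pair_neq e1 n1; have := pair_neq e2 n2.
      have := pair_neq (esym (etrans e1 e2)) n3 => a3 a2 a1.
      by apply: (half3 h1 h2 a1 a2); rewrite eq_sym.
    + have := pair_neq e1 n1; have := pair_neq e2 n2.
      have := pair_neq (esym (etrans e1 e2)) n3 => a3 a2 a1.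
      by apply: (half3 h1 h2 a1 a2); rewrite eq_sym.
by rewrite card_sum !card_ord; lia.
Qed.

Lemma partner m (x : 'I_m) : ~~ odd m -> exists y : 'I_m, (y != x) && ((y : nat)./2 == (x : nat)./2).
Proof.
move=> om.
have hm := odd_double_half m; rewrite (negbTE om) add0n in hm.
have hx := odd_double_half x.
have xm := ltn_ord x.
case ox: (odd x) hx => /= hx.
- have ylt : (x : nat).-1 < m by lia.
  exists (Ordinal ylt); apply/andP; split.
    by rewrite -val_eqE /=; apply/eqP; rewrite -hx -!addnn; lia.
  by rewrite /= -hx /= add0n doubleK uphalf_double.
- have ylt : (x : nat).+1 < m.
    move: hm hx xm; rewrite -!addnn; lia.
  exists (Ordinal ylt); apply/andP; split.
    by rewrite -val_eqE /=; apply/eqP; lia.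
  by rewrite /= -hx add0n doubleK uphalf_double.
Qed.

Lemma aux2 k n : 2 + k = n -> k <= n - 2.
Proof. lia. Qed.

Lemma J_deg m (x : 'I_m) : ~~ odd m -> \sum_y (@Jrel m) x y <= m - 2.
Proof.
move=> om; case: (partner x om) => y0 /andP[y0x hy0].
rewrite -sumT -cardE_sum.
have sub : [set y in [set: 'I_m] | Jrel x y] \subset ~: [set x; y0].
  apply/subsetP => y; rewrite !inE /Jrel /= => /andP[xy hxy].
  apply/negP => /orP[] /eqP e; subst.
  - by rewrite eqxx in xy.
  - by rewrite (eqP hy0) eqxx in hxy.
have := subset_leq_card sub.
have := cardsC [set x; y0]; rewrite cards2 eq_sym y0x card_ord; move=> h1 h2; apply: (leq_trans h2); move: h1 => /=; exact: aux2.
Qed.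

Lemma J_DU m : ~~ odd m -> DU (@Jrel m) setT <= m * (m - 2).
Proof.
move=> om; rewrite /DU sumT.
apply: (@leq_trans (\sum_(x : 'I_m) (m - 2))); last by rewrite sum_nat_const card_ord.
by apply: leq_sum => x _; rewrite /degU sumT; exact: J_deg.
Qed.

Lemma copies_deg c m (p : 'I_c * 'I_m) : ~~ odd m -> \sum_q (@copiesJ c m) p q <= m - 2.
Proof.
move=> om.
have -> : \sum_q (@copiesJ c m) p q = \sum_i \sum_j ((p.1 == i) && Jrel p.2 j) by rewrite pair_bigA.
rewrite (bigD1 p.1) //= [X in _ + X]big1 ?addn0; first by rewrite eqxx /= J_deg.
by move=> i /negbTE; rewrite eq_sym => ->; rewrite big1.
Qed.

Lemma odd_DU d : odd d ->
  DU (@oddGraph d) setT <= d.+3 * d.+1 * (d.+1 - 2) + d.+1 * d.+3 * (d.+3 - 2).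
Proof.
move=> od; rewrite /DU sumT.
rewrite (big_sumType _ xpredT) /=.
apply: leq_add.
- apply: (@leq_trans (\sum_(a : 'I_d.+3 * 'I_d.+1) (d.+1 - 2)));
    last by rewrite sum_nat_const card_prod !card_ord.
  apply: leq_sum => a _; rewrite /degU sumT (big_sumType _ xpredT) /= [X in _ + X]big1 ?addn0 //.
  by apply: copies_deg; rewrite /= ?negbK.
- apply: (@leq_trans (\sum_(a : 'I_d.+1 * 'I_d.+3) (d.+3 - 2)));
    last by rewrite sum_nat_const card_prod !card_ord.
  apply: leq_sum => a _; rewrite /degU sumT (big_sumType _ xpredT) /= big1 ?add0n //.
  by apply: copies_deg; rewrite /= ?negbK.
Qed.


Lemma lower_nat (T : finType) (g : rel T) : simple_graph g -> forall k,
  2 * nedges g <= k * #|T| ->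
  2 * #|T| <= (k + 2) * alpha g 1 /\
  (odd k -> 2 * (k + 2) * #|T| <= (k + 1) * (k + 3) * alpha g 1).
Proof.
move=> sg k hk.
have h := core sg (setT : {set T}) (ltn_addl _ (ltnSn 0) : 0 < k./2 + 1).
rewrite cardsT -edges_DU // -alpha_alU in h.
have hk2 := odd_double_half k.
move: h hk hk2; set a := alpha g 1; set n := #|T|; set E := nedges g.
move: (k./2) => i; rewrite -addnn.
case: (odd k) => /= h hk hk2; rewrite -hk2 in hk *.
- have h1 : (2 * i + 3) * n <= 2 * (i + 1) * (i + 2) * a by nia.
  split.
    have h2 : (2 * i + 3) * (2 * n) <= (2 * i + 3) * ((2 * i + 3) * a) by nia.
    rewrite leq_pmul2l // in h2; nia.
  move=> _; nia.
- split=> //.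
  have h2 : (i + 2) * (2 * n) <= (i + 2) * ((0 + (i + i) + 2) * a) by nia.
  rewrite leq_pmul2l // in h2; lia.
Qed.

Local Open Scope ring_scope.

Lemma frac_le (a b c e : nat) : (0 < b)%N -> (0 < e)%N -> (a * e <= c * b)%N ->
  a%:R / b%:R <= c%:R / e%:R :> rat.
Proof.
move=> b0 e0 h.
rewrite ler_pdivlMr ?ltr0n // mulrAC ler_pdivrMr ?ltr0n // -!natrM ler_nat.
exact: h.
Qed.

Lemma frac_eq (a b c e : nat) : (0 < b)%N -> (0 < e)%N -> (a * e = c * b)%N ->
  a%:R / b%:R = c%:R / e%:R :> rat.
Proof.
move=> b0 e0 h; apply/eqP; rewrite eq_le !frac_le // h //.
Qed.

Lemma avg_nat (T : finType) (g : rel T) (k : nat) : (0 < #|T|)%N ->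
  (avgdeg g <= k%:R) = (2 * nedges g <= k * #|T|)%N.
Proof.
move=> n0; rewrite /avgdeg ler_pdivrMr ?ltr0n // -natrM ler_nat //.
Qed.

Lemma J_simple m : simple_graph (@Jrel m).
Proof.
split; last by move=> x; rewrite /Jrel eqxx.
by move=> x y; rewrite /Jrel eq_sym; congr andb; rewrite eq_sym.
Qed.

Lemma copies_sym c m : symmetric (@copiesJ c m).
Proof. move=> p q; by rewrite /copiesJ eq_sym (fst (J_simple m)). Qed.

Lemma odd_simple d : simple_graph (@oddGraph d).
Proof.
split.
- by case=> [p|p] [q|q] //=; rewrite copies_sym.
- by case=> [p|p] /=; rewrite /copiesJ eqxx /= (snd (J_simple _)).
Qed.

Lemma alpha_le (T : finType) (g : rel T) b :
  (forall S, kindep g 1 S -> (#|S| <= b)%N) -> (alpha g 1 <= b)%N.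
Proof. by move=> h; apply/bigmax_leqP => S; exact: h. Qed.

Unset Implicit Arguments.
Theorem mainTheorem6 (d : nat) :
  [/\
    (* (1) *)
    is_f 1 d (if ~~ odd d then 2 / (d.+2)%:R
              else (2 * (d.+2)%:R) / ((d.+1)%:R * (d.+3)%:R)),
    (* (2) *)
    (if ~~ odd d then
       simple_graph (@Jrel d.+2) /\ avgdeg (@Jrel d.+2) <= d%:R /\
       is_f 1 d (kratio (@Jrel d.+2) 1)
     else
       simple_graph (@oddGraph d) /\ avgdeg (@oddGraph d) <= d%:R /\
       is_f 1 d (kratio (@oddGraph d) 1)),
    (* (3) *)
    (forall x : rat, is_f 1 d x -> 2 / (d.+2)%:R <= x)
  & (* (4) *)
    (forall (T : finType) (g : rel T), simple_graph g -> (0 < #|T|)%N ->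
       (2 * #|T|)%:R / ((Num.ceil (avgdeg g))%:~R + 2) <= ((alpha g 1)%:R : rat))].
Proof.
set v := (if ~~ odd d then _ else _).
have LB : forall r, fvals 1 d r -> v <= r /\ 2 / (d.+2)%:R <= r.
  move=> r [T [g [sg n0 avg ->]]].
  rewrite avg_nat // in avg.
  have [l1 l2] := lower_nat sg avg.
  have e2 : 2 / (d.+2)%:R <= kratio g 1.
    rewrite /kratio frac_le //; lia.
  split=> //; rewrite /v; case: ifP => // od.
  rewrite -natrM -natrM; rewrite /kratio frac_le //.
  have := l2 (negbFE od); lia.
have mk : forall (T : finType) (g : rel T), simple_graph g -> (0 < #|T|)%N ->
   avgdeg g <= d%:R -> kratio g 1 = v -> is_f 1 d v.
  move=> T g sg n0 avg kv; split; first by move=> r /LB[].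
  move=> y hy; apply: hy; exists T, g; split=> //.
have G2 : if ~~ odd d then
       simple_graph (@Jrel d.+2) /\ avgdeg (@Jrel d.+2) <= d%:R /\
       kratio (@Jrel d.+2) 1 = v
     else
       simple_graph (@oddGraph d) /\ avgdeg (@oddGraph d) <= d%:R /\
       kratio (@oddGraph d) 1 = v.
  rewrite /v; case: ifP => od.
  - have sg := J_simple d.+2.
    have n0 : (0 < #|'I_d.+2|)%N by rewrite card_ord.
    have avg : (2 * nedges (@Jrel d.+2) <= d * #|'I_d.+2|)%N.
      rewrite edges_DU // card_ord; apply: (leq_trans (J_DU _)); first by rewrite /= negbK.
      by rewrite mulnC subn2.
    split=> //; split; first by rewrite avg_nat.
    have [l1 _] := lower_nat sg avg.
    have ub : (alpha (@Jrel d.+2) 1 <= 2)%N by apply: alpha_le => S; exact: J_ub.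
    rewrite card_ord in l1.
    have ha : alpha (@Jrel d.+2) 1 = 2%N by nia.
    by rewrite /kratio ha card_ord od.
  - move/negbFE: od => od; have sg := odd_simple d.
    have hn : #|{: 'I_d.+3 * 'I_d.+1 + 'I_d.+1 * 'I_d.+3}| = (2 * (d.+1 * d.+3))%N.
      by rewrite card_sum !card_prod !card_ord; lia.
    have n0 : (0 < #|{: 'I_d.+3 * 'I_d.+1 + 'I_d.+1 * 'I_d.+3}|)%N by rewrite hn.
    have avg : (2 * nedges (@oddGraph d) <= d * #|{: 'I_d.+3 * 'I_d.+1 + 'I_d.+1 * 'I_d.+3}|)%N.
      rewrite edges_DU // hn; apply: (leq_trans (odd_DU od)).
      have d1 : (0 < d)%N by move: od; case: (d).
      have -> : (d.+1 - 2 = d - 1)%N by lia.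
      have -> : (d.+3 - 2 = d + 1)%N by lia.
      nia.
    split=> //; split; first by rewrite avg_nat.
    have [_ l2] := lower_nat sg avg.
    have ub : (alpha (@oddGraph d) 1 <= 4 * d.+2)%N by apply: alpha_le => S; exact: odd_ub.
    have := l2 od; rewrite hn => l3.
    have ha : alpha (@oddGraph d) 1 = (4 * d.+2)%N by nia.
    rewrite /kratio hn ha od /= -natrM -natrM; apply: frac_eq => //; lia.
have F1 : is_f 1 d v.
  move: G2; case: ifP => _ [sg [avg kv]]; apply: (mk _ _ sg) => //; by rewrite ?card_sum ?card_prod !card_ord.
split=> //.
- move: G2; case: ifP => _ [sg [avg kv]]; by rewrite kv.
- move=> x [_ hx]; apply: hx => r /LB[] _ //.
- move=> T g sg n0.
  have hc := ceil_ge (avgdeg g).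
  have a0 : 0 <= avgdeg g by rewrite /avgdeg divr_ge0 // ler0n.
  have c0 : (0 <= Num.ceil (avgdeg g))%R by rewrite ceil_ge0 (lt_le_trans _ a0).
  move: hc c0; case: (Num.ceil (avgdeg g)) => // k hk _.
  have hk' : avgdeg g <= k%:R by [].
  rewrite avg_nat // in hk'.
  have [l1 _] := lower_nat sg hk'.
  have -> : (k%:~R : rat) = k%:R by []. 
  rewrite -natrD ler_pdivrMr ?ltr0n ?addn2 // -natrM ler_nat mulnC.
  lia.
Qed.
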